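(* Let $\omega\in\mathbb{F}_8$ be a root of $y^3+y+1$, let $m\in\mathbb{N}$, and let $L,M,N$ be nonempty subsets of $[m]$, at least one of which is a proper subset of $[m]$. Let $D=\Delta_L+\omega\Delta_M+\omega^2\Delta_N\subseteq\mathbb{F}_8^m$, $D^c=\mathbb{F}_8^m\setminus D$, and $s=|L|+|M|+|N|$. Then the binary code $C^{(2)}_{D^c}=\{((\alpha,\beta,\gamma)\cdot x)_{x\in(D^c)^{(2)}}:\alpha,\beta,\gamma\in\mathbb{F}_2^m\}$, where $(D^c)^{(2)}=\{(a,c,b)\in(\mathbb{F}_2^m)^3: a+\omega b+\omega^2c\in D^c\}$, is a $[2^{3m}-2^s,\,3m,\,2^{3m-1}-2^{s-1}]$ binary $2$-weight linear code with weight distribution: $1$ codeword of weight $0$, $2^{3m-s}(2^s-1)$ codewords of weight $2^{3m-1}-2^{s-1}$, and $2^{3m-s}-1$ codewords of weight $2^{3m-1}$. Moreover, it is a Griesmer code and hence distance optimal. Further, if $s\le 3m-2$ then $C^{(2)}_{D^c}$ is a minimal code.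
   Context: $[m]=\{1,\dots,m\}$; $\Delta_L=\{w\in\mathbb{F}_2^m:\{i:w_i\ne0\}\subseteq L\}$; $A+\omega B+\omega^2C=\{a+\omega b+\omega^2c: a\in A,b\in B,c\in C\}$. (This code is the subfield code, with respect to the basis $\{1,\omega,\omega^2\}$, of the octanary code $C_{D^c}=\{(v\cdot d)_{d\in D^c}:v\in\mathbb{F}_8^m\}$.) A $2$-weight code has exactly two distinct nonzero Hamming weights. An $[n,k,d]$ code over $\mathbb{F}_q$ is Griesmer if $\sum_{i=0}^{k-1}\lceil d/q^i\rceil=n$, distance optimal if no $[n,k,d+1]$ linear code exists, and minimal if for every nonzero codeword $c$, each nonzero codeword $c'$ with $\mathrm{Supp}(c')\subseteq\mathrm{Supp}(c)$ is a scalar multiple of $c$. *)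

(* Defs.v *)
From HB Require Import structures.
From mathcomp Require Import all_boot all_order all_algebra.
Set Implicit Arguments. Unset Strict Implicit. Unset Printing Implicit Defensive.
Import GRing.Theory.
Local Open Scope ring_scope.

Definition supp (K : fieldType) (n : nat) (v : 'rV[K]_n) : {set 'I_n} :=
  [set i | v 0 i != 0].
Definition wt (K : fieldType) (n : nat) (v : 'rV[K]_n) : nat := #|supp v|.

Definition min_dist_is (K : finFieldType) (n : nat) (C : {vspace 'rV[K]_n}) (d : nat)
  : Prop :=
  (exists2 c, c \in C & (c != 0) && (wt c == d)) /\
  (forall c, c \in C -> c != 0 -> (d <= wt c)%N).

Definition is_nkd_code (K : finFieldType) (n k d : nat) (C : {vspace 'rV[K]_n}) : Prop :=
  \dim C = k /\ min_dist_is C d.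

Definition num_wt (K : finFieldType) (n : nat) (C : {vspace 'rV[K]_n}) (w : nat) : nat :=
  #|[set c : 'rV[K]_n | (c \in C) && (wt c == w)]|.

Definition two_weight (K : finFieldType) (n : nat) (C : {vspace 'rV[K]_n}) : Prop :=
  exists w1 w2 : nat, w1 <> w2 /\
    (exists2 c, c \in C & (c != 0) && (wt c == w1)) /\
    (exists2 c, c \in C & (c != 0) && (wt c == w2)) /\
    (forall c, c \in C -> c != 0 -> wt c = w1 \/ wt c = w2).

Definition ceil_div (a b : nat) : nat := ((a + b - 1) %/ b)%N.

Definition griesmer (K : finFieldType) (n : nat) (C : {vspace 'rV[K]_n}) : Prop :=
  exists d, min_dist_is C d /\
    (\sum_(i < \dim C) ceil_div d (#|K| ^ i))%N = n.

Definition distance_optimal (K : finFieldType) (n : nat) (C : {vspace 'rV[K]_n}) : Prop :=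
  exists d, is_nkd_code (\dim C) d C /\
    ~ (exists C' : {vspace 'rV[K]_n}, is_nkd_code (\dim C) d.+1 C').

Definition minimal_code (K : finFieldType) (n : nat) (C : {vspace 'rV[K]_n}) : Prop :=
  forall c c', c \in C -> c' \in C -> c != 0 -> c' != 0 ->
    supp c' \subset supp c -> exists a : K, c' = a *: c.

Definition Delta (m : nat) (L : {set 'I_m}) : {set 'rV['F_2]_m} :=
  [set w | supp w \subset L].

Definition embF (F : fieldType) (m : nat) (w : 'rV['F_2]_m) : 'rV[F]_m :=
  map_mx (fun x : 'F_2 => (nat_of_ord x)%:R) w.

Definition Dset (F : finFieldType) (om : F) (m : nat) (L M N : {set 'I_m})
  : {set 'rV[F]_m} :=
  [set x | [exists a in Delta L, exists b in Delta M, exists c in Delta N,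
             x == embF F a + om *: embF F b + om ^+ 2 *: embF F c]].

Definition triple (m : nat) := ('rV['F_2]_m * 'rV['F_2]_m * 'rV['F_2]_m)%type.

(* (D^c)^(2) = {(a,c,b) : a + om b + om^2 c in D^c}; a triple x = ((a,c),b) *)
Definition Dc2 (F : finFieldType) (om : F) (m : nat) (L M N : {set 'I_m})
  : {set triple m} :=
  [set x : triple m | embF F x.1.1 + om *: embF F x.2 + om ^+ 2 *: embF F x.1.2
                        \notin Dset om L M N].

Definition dotv (m : nat) (u v : 'rV['F_2]_m) : 'F_2 := \sum_i u 0 i * v 0 i.

(* (alpha,beta,gamma).(a,c,b) with u = ((alpha,beta),gamma), x = ((a,c),b) *)
Definition dot3 (m : nat) (u x : triple m) : 'F_2 :=
  dotv u.1.1 x.1.1 + dotv u.1.2 x.1.2 + dotv u.2 x.2.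

Definition cwD2 (F : finFieldType) (om : F) (m : nat) (L M N : {set 'I_m}) (u : triple m)
  : 'rV['F_2]_#|Dc2 om L M N| :=
  \row_(i < #|Dc2 om L M N|) dot3 u (enum_val i).

Definition CD2 (F : finFieldType) (om : F) (m : nat) (L M N : {set 'I_m})
  : {vspace 'rV['F_2]_#|Dc2 om L M N|} :=
  <<[seq cwD2 om L M N u | u : triple m]>>%VS.

(* Main.v *)
Require Import Defs.
From HB Require Import structures.
From mathcomp Require Import all_boot all_order all_algebra.
From mathcomp Require Import all_field zify ring.
Set Implicit Arguments. Unset Strict Implicit.
Import GRing.Theory.
Lemma ceil_term q A B : 0 < q -> q %| A -> B <= A ->
  (A - B + q - 1) %/ q + B %/ q = A %/ q.
Proof.
move=> q0 /dvdnP[a ->] BA.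
rewrite mulnK //.
have Bd := divn_eq B q; have rq := ltn_pmod B q0.
set b := B %/ q in Bd *; set r := B %% q in Bd rq *.
have ba : b <= a by rewrite -(leq_pmul2r q0); lia.
have X : a * q - B + q - 1 = (a - b) * q + (q - 1 - r).
  rewrite mulnBl; lia.
rewrite X divnMDl // divn_small ?addn0; last lia.
lia.
Qed.

Lemma geo_div t k : t < k -> \sum_(i < k) 2 ^ t %/ 2 ^ i = 2 ^ t.+1 - 1.
Proof.
elim: k t => [|k IH] t // tk.
rewrite big_ord_recl expn0 divn1.
case: t tk => [|t] tk.
  rewrite big1 // => i _; rewrite divn_small // expnS. 
  have := expn_gt0 2 i; lia.
have -> : \sum_(i < k) 2 ^ t.+1 %/ 2 ^ (bump 0 i) = \sum_(i < k) 2 ^ t %/ 2 ^ i.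
  by apply: eq_bigr => i _; rewrite /bump /= add1n !expnS divnMl.
rewrite IH //; rewrite !expnS; have := expn_gt0 2 t; lia.
Qed.

Lemma griesmer_sum k s : 0 < s -> s < k ->
  \sum_(i < k) ceil_div (2 ^ (k - 1) - 2 ^ (s - 1)) (2 ^ i) = 2 ^ k - 2 ^ s.
Proof.
move=> s0 sk.
have E : forall i : 'I_k, ceil_div (2 ^ (k - 1) - 2 ^ (s - 1)) (2 ^ i) =
   2 ^ (k - 1) %/ 2 ^ i - 2 ^ (s - 1) %/ 2 ^ i.
  move=> i; rewrite /ceil_div -(ceil_term (A := 2 ^ (k - 1)) (B := 2 ^ (s - 1)) (q := 2 ^ i)).
  - by rewrite addnK.
  - exact: expn_gt0.
  - by rewrite dvdn_exp2l //; have := ltn_ord i; lia.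
  - by rewrite leq_exp2l //; lia.
have E2 : forall i : 'I_k, 2 ^ (s - 1) %/ 2 ^ i <= 2 ^ (k - 1) %/ 2 ^ i.
  by move=> i; rewrite leq_div2r // leq_exp2l //; lia.
have S : \sum_(i < k) ceil_div (2 ^ (k - 1) - 2 ^ (s - 1)) (2 ^ i) +
         \sum_(i < k) 2 ^ (s - 1) %/ 2 ^ i = \sum_(i < k) 2 ^ (k - 1) %/ 2 ^ i.
  rewrite -big_split; apply: eq_bigr => i _; rewrite E /=; exact: subnK (E2 i).
rewrite !geo_div in S; [|lia|lia].
have e1 : (k - 1).+1 = k by lia.
have e2 : (s - 1).+1 = s by lia.
rewrite e1 e2 in S.
have := expn_gt0 2 s; have : 2 ^ s <= 2 ^ k by rewrite leq_exp2l //; lia.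
lia.
Qed.

Local Open Scope ring_scope.

Lemma F2_neq0 (x : 'F_2) : x != 0 -> x = 1.
Proof. by case: x => [[|[|k]] Hk] //= _; apply/val_inj. Qed.
Lemma F2_addxx (x : 'F_2) : x + x = 0.
Proof. by case: x => [[|[|k]] Hk] //=; apply/val_inj. Qed.
Lemma F2_cases (x : 'F_2) : x = 0 \/ x = 1.
Proof. by case: (x =P 0) => [|/eqP/F2_neq0]; [left|right]. Qed.

Lemma card_Delta m (L : {set 'I_m}) : #|Delta L| = (2 ^ #|L|)%N.
Proof.
have inj : injective (fun w : 'rV['F_2]_m => [ffun i => w 0 i]).
  by move=> w1 w2 /ffunP E; apply/rowP => i; have := E i; rewrite !ffunE.
rewrite -(card_imset _ inj).
transitivity #|pffun_on (0 : 'F_2) L predT|; last first.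
  by rewrite card_pffun_on; congr (_ ^ _)%N; apply: (@card_Fp 2).
apply: eq_card => f; apply/imsetP/pffun_onP.
  case=> w; rewrite inE => /subsetP wL ->; split=> [|y _ //].
  by apply/subsetP => i; rewrite inE ffunE => Hi; apply: wL; rewrite inE.
case=> /subsetP fL _; exists (\row_i f i).
  by rewrite inE; apply/subsetP => i; rewrite inE mxE => Hi; apply: fL.
by apply/ffunP => i; rewrite !ffunE mxE.
Qed.

Lemma card_triple m : #|{: triple m}| = (2 ^ (3 * m))%N.
Proof.
rewrite !card_prod !card_mx card_Fp // mul1n -!expnD; congr (_ ^ _)%N; lia.
Qed.

Lemma dotvDr m (u x y : 'rV['F_2]_m) : dotv u (x + y) = dotv u x + dotv u y.
Proof. by rewrite /dotv -big_split; apply: eq_bigr => i _; rewrite mxE mulrDr. Qed.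
Lemma dotvDl m (u v x : 'rV['F_2]_m) : dotv (u + v) x = dotv u x + dotv v x.
Proof. by rewrite /dotv -big_split; apply: eq_bigr => i _; rewrite mxE mulrDl. Qed.
Lemma dotv0r m (u : 'rV['F_2]_m) : dotv u 0 = 0.
Proof. by rewrite /dotv big1 // => i _; rewrite mxE mulr0. Qed.
Lemma dotv0l m (u : 'rV['F_2]_m) : dotv 0 u = 0.
Proof. by rewrite /dotv big1 // => i _; rewrite mxE mul0r. Qed.
Lemma dotv_delta m (u : 'rV['F_2]_m) j : dotv u (delta_mx 0 j) = u 0 j.
Proof.
rewrite /dotv (bigD1 j) //= big1 ?addr0 => [|i /negbTE ij]; rewrite mxE ?eqxx ?ij ?andbF ?mulr0 ?mulr1 //.
Qed.

Lemma dot3Dr m (u x y : triple m) : dot3 u (x + y) = dot3 u x + dot3 u y.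
Proof. rewrite /dot3 /= !dotvDr; ring. Qed.
Lemma dot3Dl m (u v x : triple m) : dot3 (u + v) x = dot3 u x + dot3 v x.
Proof. rewrite /dot3 /= !dotvDl; ring. Qed.
Lemma dot30l m (x : triple m) : dot3 0 x = 0.
Proof. by rewrite /dot3 /= !dotv0l !addr0. Qed.

Lemma half_set m (S : {set triple m}) (u x0 : triple m) :
  (forall x y, x \in S -> y \in S -> x + y \in S) -> x0 \in S -> dot3 u x0 = 1 ->
  (2 * #|[set x in S | dot3 u x == 1%R]| = #|S|)%N.
Proof.
move=> Sadd x0S ux0.
set A := [set x in S | _]; set B := [set x in S | dot3 u x == 0].
have AB : (#|A| + #|B|)%N = #|S|.
  rewrite -(cardsID [set x | dot3 u x == 1] S); congr (_ + _)%N; apply: eq_card => x;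
  rewrite !inE andbC //; case: (F2_cases (dot3 u x)) => ->; by rewrite ?eqxx.
have tr : forall (P Q : {set triple m}), (forall x, x \in P -> x + x0 \in Q) -> (#|P| <= #|Q|)%N.
  move=> P Q H; rewrite -(card_imset _ (addIr x0)); apply: subset_leq_card.
  by apply/subsetP => y /imsetP[x xP ->]; apply: H.
have h1 : (#|A| <= #|B|)%N.
  apply: tr => x; rewrite !inE => /andP[xS /eqP ux]; rewrite Sadd //= dot3Dr ux ux0 F2_addxx.
  done.
have h2 : (#|B| <= #|A|)%N.
  apply: tr => x; rewrite !inE => /andP[xS /eqP ux]; rewrite Sadd //= dot3Dr ux ux0 add0r.
  done.
lia.
Qed.

Definition D2 m (L M N : {set 'I_m}) : {set triple m} :=
  [set x : triple m | [&& x.1.1 \in Delta L, x.1.2 \in Delta N & x.2 \in Delta M]].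

Lemma inD2 m (L M N : {set 'I_m}) x :
  (x \in D2 L M N) = [&& x.1.1 \in Delta L, x.1.2 \in Delta N & x.2 \in Delta M].
Proof. by rewrite /D2 in_set. Qed.

Lemma Delta0 m (L : {set 'I_m}) : 0 \in Delta L.
Proof. by rewrite inE; apply/subsetP => i; rewrite inE mxE eqxx. Qed.

Lemma DeltaD m (L : {set 'I_m}) a b : a \in Delta L -> b \in Delta L -> a + b \in Delta L.
Proof.
rewrite !inE => /subsetP Ha /subsetP Hb; apply/subsetP => i; rewrite inE mxE => Hi.
case: (a 0 i =P 0) => [Ea|/eqP Ea]; last by apply: Ha; rewrite inE.
by apply: Hb; rewrite inE; move: Hi; rewrite Ea add0r.
Qed.

Lemma Delta_delta m (L : {set 'I_m}) j : j \in L -> delta_mx 0 j \in Delta L.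
Proof.
move=> jL; rewrite inE; apply/subsetP => i; rewrite inE mxE.
by case: (i =P j) => [->|]; rewrite ?andbF ?eqxx.
Qed.

Lemma dotv_Delta0 m (L : {set 'I_m}) (al a : 'rV['F_2]_m) :
  al \in Delta (~: L) -> a \in Delta L -> dotv al a = 0.
Proof.
rewrite !inE => /subsetP Ha /subsetP Hb; rewrite /dotv big1 // => i _.
case: (al 0 i =P 0) => [->|/eqP Ei]; first by rewrite mul0r.
have : i \in ~: L by apply: Ha; rewrite inE.
rewrite inE => iL; case: (a 0 i =P 0) => [->|/eqP Ej]; first by rewrite mulr0.
by move: iL; rewrite Hb // inE.
Qed.

Lemma D2_add m (L M N : {set 'I_m}) x y :
  x \in D2 L M N -> y \in D2 L M N -> x + y \in D2 L M N.
Proof.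
rewrite !inD2 => /and3P[x1 x2 x3] /and3P[y1 y2 y3]; by rewrite !DeltaD.
Qed.

Lemma D20 m (L M N : {set 'I_m}) : 0 \in D2 L M N.
Proof. by rewrite inD2 !Delta0. Qed.

Lemma card_D2 m (L M N : {set 'I_m}) : #|D2 L M N| = (2 ^ (#|L| + #|M| + #|N|))%N.
Proof.
have -> : D2 L M N = setX (setX (Delta L) (Delta N)) (Delta M).
  by apply/setP => x; rewrite inD2 !inE andbA.
rewrite !cardsX !card_Delta -!expnD; congr (_ ^ _)%N; lia.
Qed.

Definition Q m (L M N : {set 'I_m}) : {set triple m} := D2 (~: L) (~: M) (~: N).

Lemma PQ m (L M N : {set 'I_m}) u :
  [forall x in D2 L M N, dot3 u x == 0] = (u \in Q L M N).
Proof.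
apply/forall_inP/idP.
  move=> H; rewrite /Q inD2; apply/and3P; split; rewrite inE; apply/subsetP => i;
  rewrite inE !inE => Hi; apply/negP => iL.
  - have := H ((delta_mx 0 i, 0), 0); rewrite inD2 Delta_delta //= !Delta0 /=.
    by rewrite /dot3 /= dotv_delta !dotv0r !addr0 (negbTE Hi); move/(_ isT).
  - have := H ((0, delta_mx 0 i), 0); rewrite inD2 Delta_delta //= !Delta0 /=.
    by rewrite /dot3 /= dotv_delta !dotv0r add0r addr0 (negbTE Hi); move/(_ isT).
  - have := H ((0, 0), delta_mx 0 i); rewrite inD2 Delta_delta //= !Delta0 /=.
    by rewrite /dot3 /= dotv_delta !dotv0r !add0r (negbTE Hi); move/(_ isT).
rewrite /Q !inD2 => /and3P[u1 u2 u3] x; rewrite inD2 => /and3P[x1 x2 x3].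
by rewrite /dot3 !(dotv_Delta0 u1) // !(dotv_Delta0 u2) // !(dotv_Delta0 u3) // !addr0.
Qed.

Lemma Delta_T0 m (a : 'rV['F_2]_m) : a \in Delta (~: setT) -> a = 0.
Proof.
rewrite inE setCT => /subsetP H; apply/rowP => i; rewrite mxE.
by apply/eqP; apply/negP => /negP Hi; have := H i; rewrite !inE => /(_ Hi).
Qed.

Lemma dot3_nz m (u : triple m) : u != 0 -> exists x, dot3 u x = 1.
Proof.
move=> un0; case: (boolP [exists x, dot3 u x == 1]) => [/existsP[x /eqP]|]; first by exists x.
rewrite negb_exists => /forallP H; exfalso; move/negP: un0; apply.
have : u \in Q setT setT setT.
  rewrite -PQ; apply/forall_inP => x _; have := H x.
  by case: (F2_cases (dot3 u x)) => ->; rewrite ?eqxx.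
rewrite /Q inD2 => /and3P[/Delta_T0 u1 /Delta_T0 u2 /Delta_T0 u3].
by clear H; case: u u1 u2 u3 => [[a b] c] /= -> -> ->.
Qed.

Lemma card_Q m (L M N : {set 'I_m}) :
  #|Q L M N| = (2 ^ (3 * m - (#|L| + #|M| + #|N|)))%N.
Proof.
rewrite card_D2; congr (_ ^ _)%N.
have cL := cardsC L; have cM := cardsC M; have cN := cardsC N.
rewrite cardT size_enum_ord in cL cM cN; lia.
Qed.

Lemma setI_sep (T : finType) (S : {set T}) (P : pred T) :
  [set x in setT | P x] :&: S = [set x in S | P x].
Proof. by apply/setP=> x; rewrite !inE andbC. Qed.
Lemma setD_sep (T : finType) (S : {set T}) (P : pred T) :
  [set x in setT | P x] :\: S = [set x in ~: S | P x].
Proof. by apply/setP=> x; rewrite !inE andbC. Qed.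

Lemma exp2_pred k : (0 < k)%N -> (2 ^ k = 2 * 2 ^ (k - 1))%N.
Proof. by case: k => // k _; rewrite expnS subn1. Qed.

Section Field.
Variables (F : finFieldType) (om : F).
Hypothesis cardF : #|F| = 8%N.
Hypothesis omE : om ^+ 3 + om + 1 = 0.

Lemma two0 : (2%:R : F) = 0.
Proof. by apply: pcharf0; apply: (@card_finPcharP F 2 3). Qed.

Lemma addxx (x : F) : x + x = 0.
Proof. by rewrite -mulr2n -mulr_natr two0 mulr0. Qed.

Definition h (t : 'F_2) : F := (nat_of_ord t)%:R.

Lemma h0 : h 0 = 0. Proof. by []. Qed.
Lemma h1 : h 1 = 1. Proof. by []. Qed.

Lemma hD s t : h (s + t) = h s + h t.
Proof.
case: (F2_cases s) => ->; case: (F2_cases t) => ->;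
  rewrite ?add0r ?addr0 ?h0 ?h1 ?add0r ?addr0 //.
by rewrite F2_addxx h0 addxx.
Qed.

Lemma key (a b c : 'F_2) : h a + om * h b + om ^+ 2 * h c = 0 -> [/\ a = 0, b = 0 & c = 0].
Proof.
have o0 : om != 0.
  apply/eqP => E; move: omE; rewrite E expr0n /= !add0r => /eqP; by rewrite oner_eq0.
have opp1 : -1 = 1 :> F by apply/eqP; rewrite eq_sym -addr_eq0 addxx.
have n1 : 1 + om != 0.
  apply/eqP => E. have E1 : om = 1 by rewrite -opp1 -(subr0 om) -E; ring.
  move: omE; rewrite E1 expr1n addxx add0r => /eqP; by rewrite oner_eq0.
have n2 : 1 + om ^+ 2 != 0.
  apply/eqP => E. have E1 : om ^+ 3 = om.
    have -> : om ^+ 3 = om * (1 + om ^+ 2) - om * 1 by ring.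
    by rewrite E mulr0 mulr1 sub0r -mulN1r opp1 mul1r.
  move: omE; rewrite E1 addxx add0r => /eqP; by rewrite oner_eq0.
have n3 : om + om ^+ 2 != 0.
  have -> : om + om ^+ 2 = om * (1 + om) by ring.
  by rewrite mulf_neq0.
have n4 : 1 + om + om ^+ 2 != 0.
  apply/eqP => E.
  have E1 : om + (1 + 1) = 0.
    have -> : om + (1 + 1) = om ^+ 3 + om + 1 - (om - 1) * (1 + om + om ^+ 2) by ring.
    by rewrite omE E mulr0 subr0.
  by move: o0; rewrite -E1 addxx addr0 eqxx.
by case: (F2_cases a) => ->; case: (F2_cases b) => ->; case: (F2_cases c) => ->;
  rewrite ?h0 ?h1 ?mulr0 ?mulr1 ?addr0 ?add0r => // /eqP; rewrite ?oner_eq0 ?expf_eq0 ?(negbTE o0) ?(negbTE n1) ?(negbTE n2) ?(negbTE n3) ?(negbTE n4) ?andbF.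
Qed.


Lemma F2_eq_add (x y : 'F_2) : x + y = 0 -> x = y.
Proof. by move=> E; rewrite -[x]addr0 -(F2_addxx y) addrA E add0r. Qed.

Lemma embFE m (w : 'rV['F_2]_m) i : embF F w 0 i = h (w 0 i).
Proof. by rewrite mxE. Qed.

Definition Emb m (a b c : 'rV['F_2]_m) : 'rV[F]_m :=
  embF F a + om *: embF F b + om ^+ 2 *: embF F c.

Lemma Emb_inj m (a1 b1 c1 a2 b2 c2 : 'rV['F_2]_m) :
  Emb a1 b1 c1 = Emb a2 b2 c2 -> [/\ a1 = a2, b1 = b2 & c1 = c2].
Proof.
move=> /rowP E.
have K i : [/\ a1 0 i + a2 0 i = 0, b1 0 i + b2 0 i = 0 & c1 0 i + c2 0 i = 0].
  apply: key; rewrite !hD.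
  have := E i; rewrite !mxE => Ei.
  have -> : h (a1 0 i) + h (a2 0 i) + om * (h (b1 0 i) + h (b2 0 i)) +
    om ^+ 2 * (h (c1 0 i) + h (c2 0 i)) =
    (h (a1 0 i) + om * h (b1 0 i) + om ^+ 2 * h (c1 0 i)) +
    (h (a2 0 i) + om * h (b2 0 i) + om ^+ 2 * h (c2 0 i)) by ring.
  by rewrite Ei addxx.
split; apply/rowP => i; have [Ka Kb Kc] := K i; exact: F2_eq_add.
Qed.

Variables (m : nat) (L M N : {set 'I_m}).


Lemma inDset (a b c : 'rV['F_2]_m) :
  (Emb a b c \in Dset om L M N) = [&& a \in Delta L, b \in Delta M & c \in Delta N].
Proof.
rewrite inE; apply/existsP/idP.
  case=> a' /andP[a'L /existsP[b' /andP[b'M /existsP[c' /andP[c'N /eqP E]]]]].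
  by have [-> -> ->] := Emb_inj E; rewrite a'L b'M c'N.
case/and3P=> aL bM cN; exists a; rewrite aL /=; apply/existsP; exists b; rewrite bM /=.
by apply/existsP; exists c; rewrite cN /=.
Qed.

Lemma Dc2E : Dc2 om L M N = ~: D2 L M N.
Proof.
apply/setP => x; rewrite in_setC in_set.
rewrite (_ : (_ \in Dset om L M N) = (Emb x.1.1 x.2 x.1.2 \in Dset om L M N)) // inDset.
by rewrite inD2 [in LHS](andbC (x.2 \in _)).
Qed.

Lemma wt_cw u : wt (cwD2 om L M N u) = #|[set x in Dc2 om L M N | dot3 u x == 1]|.
Proof.
transitivity (\sum_(x in Dc2 om L M N) (dot3 u x == 1%R : nat))%N; last first.
  rewrite -sum1_card big_mkcond [RHS]big_mkcond /=; apply: eq_bigr => x _.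
  by rewrite [in RHS]in_set; case: (x \in Dc2 om L M N); case: (dot3 u x == 1).
rewrite big_enum_val /=.
rewrite /wt -sum1_card big_mkcond /=.
apply: eq_bigr => i _; rewrite inE /cwD2 mxE.
by case: (F2_cases (dot3 u (enum_val i))) => ->.
Qed.

Lemma wt_formula u : (0 < m)%N -> (0 < #|L| + #|M| + #|N|)%N -> u != 0 ->
  wt (cwD2 om L M N u) = if u \in Q L M N then (2 ^ (3 * m - 1))%N
                         else (2 ^ (3 * m - 1) - 2 ^ (#|L| + #|M| + #|N| - 1))%N.
Proof.
move=> hm hs un0; rewrite wt_cw Dc2E.
have [x1 ux1] := dot3_nz un0.
have tot := @half_set m setT u x1 (fun _ _ _ _ => in_setT _) (in_setT _) ux1.
rewrite cardsT card_triple in tot.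
have spl := cardsID (D2 L M N) [set x in setT | dot3 u x == 1].
rewrite setI_sep setD_sep in spl.
have e1 := exp2_pred (_ : 0 < 3 * m)%N; have e2 := exp2_pred hs.
case: ifP => uQ.
  have E0 : [set x in D2 L M N | dot3 u x == 1] = set0.
    apply/setP => x; rewrite inE in_set0; apply/negP => /andP[xD /eqP ux].
    move: uQ; rewrite -PQ => /forall_inP/(_ x xD); by rewrite ux oner_eq0.
  rewrite E0 cards0 in spl; rewrite e1 in tot; last lia.
  rewrite -spl in tot; lia.
have [x0 x0D ux0] : exists2 x0, x0 \in D2 L M N & dot3 u x0 = 1.
  move/negbT: uQ; rewrite -PQ negb_forall_in => /existsP[x0 /andP[x0D ux0]].
  by exists x0 => //; apply: F2_neq0.
have hD := @half_set m (D2 L M N) u x0 (@D2_add m L M N) x0D ux0.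
rewrite card_D2 in hD; rewrite e1 in tot; last lia.
rewrite e2 in hD; rewrite -spl in tot; lia.
Qed.

Local Notation f := (cwD2 om L M N).

Lemma cw_add u v : f (u + v) = f u + f v.
Proof. by apply/rowP => i; rewrite !mxE dot3Dl. Qed.

Lemma cw0 : f 0 = 0.
Proof. by apply/rowP => i; rewrite !mxE dot30l. Qed.

Lemma memC c : (c \in CD2 om L M N) <-> exists u, c = f u.
Proof.
split; last first.
  case=> u ->; apply: memv_span; apply: map_f; exact: mem_enum.
move=> Hc; have := coord_span (X := in_tuple [seq f u | u : triple m]) Hc.
move=> ->; apply: (big_ind (fun v => exists u, v = f u)).
- by exists 0; rewrite cw0.
- by move=> _ _ [u1 ->] [u2 ->]; exists (u1 + u2); rewrite cw_add.
move=> i _.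
have : (in_tuple [seq f u | u : triple m])`_i \in [seq f u | u : triple m].
  by apply: mem_nth; exact: ltn_ord.
case/mapP => u _ ->.
by case: (F2_cases (coord (in_tuple [seq f u | u : triple m]) i c)) => ->; [exists 0; rewrite scale0r cw0 | exists u; rewrite scale1r].
Qed.
End Field.

Lemma card_vs2 n (C : {vspace 'rV['F_2]_n}) : #|C| = (2 ^ \dim C)%N.
Proof. by rewrite card_vspace card_Fp. Qed.

Lemma wt_sum n (c : 'rV['F_2]_n) : wt c = (\sum_i (c 0%R i != 0%R))%N.
Proof. by rewrite /wt /supp -sum1_card big_mkcond /=; apply: eq_bigr => i _; rewrite inE; case: (_ != _). Qed.

Lemma half_coord n (C : {vspace 'rV['F_2]_n}) (i : 'I_n) :
  (2 * #|[set c | (c \in C) && (c 0%R i != 0%R)]| <= #|C|)%N.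
Proof.
set A := [set c | _]; set B := [set c | (c \in C) && (c 0 i == 0)].
have AB : (#|A| + #|B|)%N = #|C|.
  rewrite -(cardID [pred c : 'rV['F_2]_n | c 0 i != 0] C); congr (_ + _)%N; apply: eq_card => c;
  by rewrite !inE /= ?negbK andbC.
have : (#|A| <= #|B|)%N.
  case: (set_0Vmem A) => [->|[c0]]; first by rewrite cards0.
  rewrite inE => /andP[c0C c0i].
  rewrite -(card_imset _ (addIr c0)); apply: subset_leq_card.
  apply/subsetP => y /imsetP[c]; rewrite inE => /andP[cC ci] ->.
  rewrite inE memvD //= mxE (F2_neq0 ci) (F2_neq0 c0i) F2_addxx eqxx.
  done.
rewrite -AB; lia.
Qed.

Lemma wt0 n : wt (0 : 'rV['F_2]_n) = 0%N.
Proof. by rewrite wt_sum big1 // => i _; rewrite mxE eqxx. Qed.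

Lemma plotkin_sum n (C : {vspace 'rV['F_2]_n}) :
  (2 * \sum_(c in C) wt c <= n * #|C|)%N.
Proof.
under eq_bigr => c _ do rewrite wt_sum.
rewrite exchange_big /= big_distrr /=.
rewrite -[n in (_ <= n * _)%N]card_ord -sum_nat_const.
apply: leq_sum => i _.
apply: (leq_trans _ (half_coord C i)); rewrite leq_mul2l /= -sum1_card.
rewrite [X in (_ <= X)%N]big_mkcond /= big_mkcond /=.
apply: leq_sum => c _; rewrite !inE; by case: (c \in C); case: (_ != _).
Qed.

Lemma plotkin n (C : {vspace 'rV['F_2]_n}) d :
  (forall c, c \in C -> c != 0 -> (d <= wt c)%N) ->
  (2 * ((2 ^ \dim C - 1) * d) <= n * 2 ^ \dim C)%N.
Proof.
move=> Hd; rewrite -card_vs2; apply: leq_trans (plotkin_sum C).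
rewrite leq_mul2l /= (bigD1 0) ?mem0v //= wt0 add0n.
rewrite (cardD1 0) mem0v add1n subSS subn0.
rewrite -sum_nat_const big_mkcond [X in (_ <= X)%N]big_mkcond /=.
apply: leq_sum => c _; rewrite !inE andbC.
by case: (c \in C) / boolP => //= cC; case: (c != 0) / boolP => //= cn0; apply: Hd.
Qed.


Lemma minimal2 n (C : {vspace 'rV['F_2]_n}) d W :
  (forall c, c \in C -> c != 0 -> (d <= wt c)%N /\ (wt c <= W)%N) ->
  (W < 2 * d)%N -> minimal_code C.
Proof.
move=> HC HW c c' cC c'C cn0 c'n0 sub; exists 1; rewrite scale1r.
case: (c' =P c) => // ne; exfalso.
have dC : c - c' \in C by rewrite memvB.
have dn0 : c - c' != 0 by rewrite subr_eq0 eq_sym; apply/eqP.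
have sD : supp (c - c') = supp c :\: supp c'.
  apply/setP => i; rewrite !inE !mxE.
  have := subsetP sub i; rewrite !inE.
  case: (F2_cases (c 0 i)) => ->; case: (F2_cases (c' 0 i)) => ->;
    rewrite ?subrr ?subr0 ?sub0r ?oppr_eq0 ?eqxx ?oner_eq0 //=; try by move/(_ isT).
have ew : wt c = (wt (c - c') + wt c')%N.
  rewrite /wt sD -(cardsID (supp c') (supp c)) addnC; congr (_ + _)%N.
  by rewrite (setIidPr sub).
have [h1 h2] := HC _ cC cn0; have [h3 _] := HC _ dC dn0; have [h5 _] := HC _ c'C c'n0.
have h6 : (d + d <= wt c)%N by rewrite ew leq_add.
move: (leq_trans h6 h2) HW; clear; lia.
Qed.


Lemma rowF2_eq_add m (a b : 'rV['F_2]_m) : a + b = 0 -> a = b.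
Proof. by move/rowP=> E; apply/rowP => i; apply: F2_eq_add; have := E i; rewrite !mxE. Qed.

Lemma rowF2_addxx m (a : 'rV['F_2]_m) : a + a = 0.
Proof. by apply/rowP => i; rewrite !mxE F2_addxx. Qed.

Lemma tri_eq_add m (u v : triple m) : u + v = 0 -> u = v.
Proof.
case: u v => [[a b] c] [[a' b'] c'] [] /rowF2_eq_add -> /rowF2_eq_add -> /rowF2_eq_add -> //.
Qed.

Section Main.
Variables (F : finFieldType) (om : F).
Hypothesis cardF : #|F| = 8%N.
Hypothesis omE : om ^+ 3 + om + 1 = 0.
Variables (m : nat) (L M N : {set 'I_m}).
Local Notation s := (#|L| + #|M| + #|N|)%N.
Hypothesis hm : (0 < m)%N.
Hypothesis hs : (0 < s)%N.
Hypothesis hlt : (s < 3 * m)%N.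
Local Notation f := (cwD2 om L M N).
Local Notation C := (CD2 om L M N).
Local Notation W := (2 ^ (3 * m - 1))%N.
Local Notation dd := (2 ^ (3 * m - 1) - 2 ^ (s - 1))%N.

Lemma aW : (2 ^ (3 * m) = 2 * W)%N. Proof. apply: exp2_pred; lia. Qed.
Lemma aS : (2 ^ s = 2 * 2 ^ (s - 1))%N. Proof. exact: exp2_pred. Qed.
Lemma aSW : (2 ^ s <= W)%N. Proof. rewrite leq_exp2l //; lia. Qed.
Lemma aS0 : (0 < 2 ^ (s - 1))%N. Proof. exact: expn_gt0. Qed.
Lemma dd_pos : (0 < dd)%N. Proof. have := aS; have := aSW; have := aS0; lia. Qed.
Lemma dd_ltW : (dd < W)%N. Proof. have := aS; have := aSW; have := aS0; lia. Qed.

Lemma wt_f u : wt (f u) = if u == 0 then 0%N else if u \in Q L M N then W else dd.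
Proof.
case: eqP => [->|/eqP un0]; first by rewrite cw0 wt0.
exact: wt_formula.
Qed.

Lemma f_inj : injective f.
Proof.
move=> u v E; apply: tri_eq_add.
have : wt (f (u + v)) = 0%N by rewrite cw_add E rowF2_addxx wt0.
rewrite wt_f; case: eqP => // _; case: ifP => _; have := dd_pos; lia.
Qed.

Lemma Cset (P : pred 'rV['F_2]_#|Dc2 om L M N|) :
  [set c | (c \in C) && P c] = f @: [set u | P (f u)].
Proof.
apply/setP => c; rewrite inE; apply/andP/imsetP.
  case=> /memC[u ->] Pu; by exists u; rewrite ?inE.
by case=> u; rewrite inE => Pu ->; split => //; apply/memC; exists u.
Qed.

Lemma numC w : num_wt C w = #|[set u | wt (f u) == w]|.
Proof. by rewrite /num_wt Cset card_imset //; exact: f_inj. Qed.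

Lemma dimC : \dim C = (3 * m)%N.
Proof.
have : #|C| = (2 ^ (3 * m))%N.
  have -> : #|C| = #|[set c | (c \in C) && true]| by apply: eq_card => c; rewrite inE andbT.
  by rewrite Cset card_imset; [rewrite (_ : [set u | true] = setT) ?cardsT ?card_triple // ; apply/setP => u; rewrite !inE | exact: f_inj].
by rewrite card_vs2 => /eqP; rewrite eqn_exp2l // => /eqP.
Qed.


Local Notation q := (2 ^ (3 * m - s))%N.

Lemma aq : (2 ^ (3 * m) = q * 2 ^ s)%N.
Proof. by rewrite -expnD; congr (_ ^ _)%N; lia. Qed.
Lemma aq2 : (2 <= q)%N.
Proof. by rewrite -{1}(expn1 2) leq_exp2l //; lia. Qed.

Lemma Q0 : 0 \in Q L M N.
Proof. exact: D20. Qed.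

Lemma wt_cases c : c \in C -> c != 0 -> wt c = W \/ wt c = dd.
Proof.
case/memC => u -> cn0; rewrite wt_f; case: eqP => [E|_]; first by move: cn0; rewrite E cw0 eqxx.
by case: ifP; [left|right].
Qed.

Lemma wt_bounds c : c \in C -> c != 0 -> (dd <= wt c)%N /\ (wt c <= W)%N.
Proof. move=> cC cn0; have := dd_ltW; case: (wt_cases cC cn0) => ->; lia. Qed.

Lemma num0 : num_wt C 0 = 1%N.
Proof.
rewrite numC; transitivity #|[set (0 : triple m)]|; last exact: cards1.
apply: eq_card => u; rewrite !inE wt_f.
case: (u =P 0) => // _; have := dd_pos; have := dd_ltW; case: ifP => _ h1 h2; apply/eqP; lia.
Qed.

Lemma setd : [set u | wt (f u) == dd] = ~: Q L M N.
Proof.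
apply/setP => u; rewrite in_setC in_set wt_f; case: (u =P 0) => [->|_].
  by rewrite Q0 /=; apply/negbTE; rewrite eq_sym -lt0n dd_pos.
by case: (u \in Q L M N); rewrite ?eqxx //; apply/negbTE/eqP; have := dd_ltW; lia.
Qed.

Lemma numd : num_wt C dd = (q * (2 ^ s - 1))%N.
Proof.
rewrite numC setd; have := cardsC (Q L M N); rewrite card_triple card_Q aq.
rewrite mulnBr muln1 => E; by rewrite -E addKn.
Qed.

Lemma setW : [set u | wt (f u) == W] = Q L M N :\ (0 : triple m).
Proof.
apply/setP => u; rewrite in_setD1 in_set wt_f; case: (u =P 0) => [->|_] /=.
  by apply/negbTE/eqP; have := dd_ltW; lia.
by case: (u \in Q L M N); rewrite ?eqxx //; apply/negbTE/eqP; have := dd_ltW; lia.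
Qed.

Lemma numW : num_wt C W = (q - 1)%N.
Proof.
rewrite numC setW; have := cardsD1 (0 : triple m) (Q L M N); rewrite Q0 card_Q add1n; move=> E; by rewrite E subn1.
Qed.

Lemma md : min_dist_is C dd.
Proof.
split; last by move=> c cC cn0; case: (wt_bounds cC cn0).
have : (0 < #|~: Q L M N|)%N.
  rewrite -setd -numC numd; have := aq2; have : (2 <= 2 ^ s)%N by rewrite -{1}(expn1 2) leq_exp2l.
  by rewrite muln_gt0; lia.
rewrite card_gt0 => /set0Pn[u]; rewrite -setd inE => /eqP wu.
exists (f u); first by apply/memC; exists u.
by rewrite wu eqxx andbT; apply/eqP => E; move: wu; rewrite E wt0; have := dd_pos; lia.
Qed.

Lemma twoW : two_weight C.
Proof.
exists dd, W; split; first by have := dd_ltW; lia.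
split; first by case: md.
split; last by move=> c cC cn0; case: (wt_cases cC cn0); [right|left].
have : (0 < #|Q L M N :\ (0 : triple m)%R|)%N by rewrite -setW -numC numW; have := aq2; lia.
rewrite card_gt0 => /set0Pn[u]; rewrite -setW inE => /eqP wu.
exists (f u); first by apply/memC; exists u.
by rewrite wu eqxx andbT; apply/eqP => E; move: wu; rewrite E wt0; have := dd_pos; lia.
Qed.

Lemma cardDc2 : #|Dc2 om L M N| = (2 ^ (3 * m) - 2 ^ s)%N.
Proof.
rewrite Dc2E //; have := cardsC (D2 L M N); rewrite card_triple card_D2; lia.
Qed.

Lemma griesC : griesmer C.
Proof.
exists dd; split; first exact: md.
rewrite dimC (@card_Fp 2) // cardDc2; exact: griesmer_sum.
Qed.

Lemma doptC : distance_optimal C.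
Proof.
exists dd; split; first by split; [|exact: md].
case=> C' [dC' [_ Hmin]].
have := plotkin Hmin; rewrite dC' dimC cardDc2 aW aS.
have := aSW; have := aS0; rewrite aS; set S := (2 ^ (s - 1))%N; set w := W.
move=> h1 h2; nia.
Qed.

Lemma minC : (s <= 3 * m - 2)%N -> minimal_code C.
Proof.
move=> hs2; apply: (minimal2 (d := dd) (W := W)); first exact: wt_bounds.
have : (2 ^ s <= 2 ^ (3 * m - 2))%N by rewrite leq_exp2l.
have -> : W = (2 * 2 ^ (3 * m - 2))%N by rewrite -expnS; congr (_ ^ _)%N; lia.
have := aS; have := aS0; lia.
Qed.

End Main.

Unset Implicit Arguments. Set Strict Implicit.

Theorem mainTheorem10 (F : finFieldType) (om : F) :
  #|F| = 8%N -> om ^+ 3 + om + 1 = 0 ->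
  forall (m : nat) (L M N : {set 'I_m}),
    L != set0 -> M != set0 -> N != set0 ->
    [|| L != setT, M != setT | N != setT] ->
    let s := (#|L| + #|M| + #|N|)%N in
    let C := CD2 om L M N in
    [/\ #|Dc2 om L M N| = (2 ^ (3 * m) - 2 ^ s)%N,
        is_nkd_code (3 * m) (2 ^ (3 * m - 1) - 2 ^ (s - 1)) C,
        two_weight C,
        [/\ num_wt C 0 = 1%N,
            num_wt C (2 ^ (3 * m - 1) - 2 ^ (s - 1)) = (2 ^ (3 * m - s) * (2 ^ s - 1))%N
          & num_wt C (2 ^ (3 * m - 1)) = (2 ^ (3 * m - s) - 1)%N]
      & [/\ griesmer C, distance_optimal C
          & (s <= 3 * m - 2)%N -> minimal_code C]].
Proof.
move=> cardF omE m L M N L0 M0 N0 prop s C.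
have hm : (0 < m)%N by case/set0Pn: L0 => i _; exact: (leq_ltn_trans (leq0n i) (ltn_ord i)).
have cle : forall A : {set 'I_m}, (#|A| <= m)%N.
  by move=> A; rewrite -[X in (_ <= X)%N](card_ord m); exact: max_card.
have clt : forall A : {set 'I_m}, A != setT -> (#|A| < m)%N.
  move=> A; apply: contraNT; rewrite -leqNgt => h.
  by rewrite eqEcard subsetT cardsT card_ord h.
rewrite /s /C; clear s C.
have hs : (0 < #|L| + #|M| + #|N|)%N by have := card_gt0 L; rewrite L0; lia.
have hlt : (#|L| + #|M| + #|N| < 3 * m)%N.
  have := cle L; have := cle M; have := cle N.
  case/or3P: prop => /clt; lia.
split.
- exact (cardDc2 cardF omE hm hs hlt).
- split; [exact (dimC cardF omE hm hs hlt) | exact (md cardF omE hm hs hlt)].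
- exact (twoW cardF omE hm hs hlt).
- split; [exact (num0 cardF omE hm hs hlt) | exact (numd cardF omE hm hs hlt)
         | exact (numW cardF omE hm hs hlt)].
- split; [exact (griesC cardF omE hm hs hlt) | exact (doptC cardF omE hm hs hlt)
         | exact (minC cardF omE hm hs hlt)].
Qed.
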